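(* For every set $\Gamma$ of formulas and every formula $\alpha$ of the language of $\mathbb{F}$ containing no nested modal operators, $\Gamma\models^{\mathbb{F}}\alpha$ if and only if $\Gamma^*\models\alpha^*$, where $\Gamma^*=\{\gamma^*:\gamma\in\Gamma\}$.
   Context: Propositional formulas are built from a countable set of variables with $\bot,\land,\lor,\to,\leftrightarrow,\neg$. The language of $\mathbb{F}$ adds unary $\Box,\lozenge$ and dyadic $\bigcirc(\psi/\varphi)$; a formula has no nested modal operators (is flat) if $\Box,\lozenge,\bigcirc$ are applied only to propositional formulas. A preference model is $\langle S,\succeq,V\rangle$ with $S$ a set, $\succeq\subseteq S\times S$ arbitrary, $V$ a valuation; for a set $X\subseteq S$, $\mathit{most}(X)=\{s\in X:\forall v\in X\,(v\succeq s\Rightarrow s\succeq v)\}$; it satisfies limitedness if for every formula $\varphi$, $\|\varphi\|\neq\emptyset\Rightarrow\mathit{most}(\|\varphi\|)\neq\emptyset$, where $\|\varphi\|$ is the truth set. Truth: Boolean clauses as usual; $\Box\varphi$ holds at $s$ iff $\varphi$ holds at every state; $\lozenge\varphi$ iff $\varphi$ holds at some state; $\bigcirc(\psi/\varphi)$ holds at $s$ iff $\mathit{most}(\|\varphi\|)\subseteq\|\psi\|$. $\Gamma\models^{\mathbb{F}}\alpha$ means: in every preference model satisfying limitedness, at every state where all of $\Gamma$ hold, $\alpha$ holds. The language $\mathcal{L}_T$ is $\alpha::=\varphi\mid\varphi\rightsquigarrow\varphi\mid B(\alpha)\mid\alpha*\alpha\mid\neg\alpha$ ($\varphi$ propositional,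 $*$ binary connective). A Trust model is $\mathcal{M}=\langle S,(S_i)_{i\in I},(\succeq_i)_{i\in I},R,V\rangle$ where $R\subseteq S\times S$ is serial and transitive, $(S_i)_{i\in I}$ is a partition of $S$, each $\succeq_i\subseteq S_i\times S_i$ is arbitrary, $V$ assigns to each variable a subset of $S$, and for each $i$ and each propositional $\varphi$: $\|\varphi\|_i\neq\emptyset\Rightarrow\mathit{most}(\|\varphi\|_i)\neq\emptyset$, where $\|\varphi\|_i=\{v\in S_i:\mathcal{M},v\models\varphi\}$ and $\mathit{most}(\|\varphi\|_i)=\{s\in\|\varphi\|_i:\forall v\in\|\varphi\|_i\,(v\succeq_i s\Rightarrow s\succeq_i v)\}$. Truth: $s\models p$ iff $s\in V(p)$; Boolean clauses as usual; $s\models\varphi\rightsquigarrow\psi$ iff $\mathit{most}(\|\varphi\|_i)\subseteq\|\psi\|_i$ for the $i$ with $s\in S_i$; $s\models B(\alpha)$ iff $v\models\alpha$ for all $v$ with $sRv$. $\Gamma\models\alpha$ means: in every Trust model, at every state where all of $\Gamma$ hold, $\alpha$ holds. Translation $^*$: $\varphi^*=\varphi$ for propositional $\varphi$, $(\Box\varphi)^*=\neg\varphi\rightsquigarrow\bot$, $(\lozenge\varphi)^*=\neg(\varphi\rightsquigarrow\bot)$, $(\bigcirc(\psi/\varphi))^*=\varphi\rightsquigarrow\psi$, commuting with Boolean connectives. *)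

(* Defs.v *)
From Stdlib Require Import Classical.

Inductive PForm : Type :=
| PVar : nat -> PForm
| PBot : PForm
| PAnd : PForm -> PForm -> PForm
| POr  : PForm -> PForm -> PForm
| PImp : PForm -> PForm -> PForm
| PIff : PForm -> PForm -> PForm
| PNeg : PForm -> PForm.

Inductive FForm : Type :=
| FVar : nat -> FForm
| FBot : FForm
| FAnd : FForm -> FForm -> FForm
| FOr  : FForm -> FForm -> FForm
| FImp : FForm -> FForm -> FForm
| FIff : FForm -> FForm -> FForm
| FNeg : FForm -> FForm
| FBox : FForm -> FForm
| FDia : FForm -> FForm
| FObl : FForm -> FForm -> FForm.  (* FObl psi phi = O(psi/phi) *)

Fixpoint to_prop (a : FForm) : option PForm :=
  match a with
  | FVar n => Some (PVar n)
  | FBot => Some PBot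
  | FAnd a b => match to_prop a, to_prop b with Some p, Some q => Some (PAnd p q) | _, _ => None end
  | FOr a b => match to_prop a, to_prop b with Some p, Some q => Some (POr p q) | _, _ => None end
  | FImp a b => match to_prop a, to_prop b with Some p, Some q => Some (PImp p q) | _, _ => None end
  | FIff a b => match to_prop a, to_prop b with Some p, Some q => Some (PIff p q) | _, _ => None end
  | FNeg a => match to_prop a with Some p => Some (PNeg p) | None => None end
  | FBox _ | FDia _ | FObl _ _ => None
  end.

Definition is_prop (a : FForm) : Prop := exists p, to_prop a = Some p.

Fixpoint flat (a : FForm) : Prop :=
  match a with
  | FVar _ | FBot => True
  | FAnd a b | FOr a b | FImp a b | FIff a b => flat a /\ flat b
  | FNeg a => flat a
  | FBox a | FDia a => is_prop a
  | FObl b a => is_prop b /\ is_prop a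
  end.

Record PrefModel : Type := {
  pS : Type;
  pref : pS -> pS -> Prop;       (* s >= t *)
  pV : nat -> pS -> Prop
}.

Definition most {S : Type} (ge : S -> S -> Prop) (X : S -> Prop) : S -> Prop :=
  fun s => X s /\ forall v, X v -> ge v s -> ge s v.

Fixpoint psat (M : PrefModel) (s : pS M) (a : FForm) : Prop :=
  match a with
  | FVar n => pV M n s
  | FBot => False
  | FAnd a b => psat M s a /\ psat M s b
  | FOr a b => psat M s a \/ psat M s b
  | FImp a b => psat M s a -> psat M s b
  | FIff a b => (psat M s a <-> psat M s b)
  | FNeg a => ~ psat M s a
  | FBox a => forall t, psat M t a
  | FDia a => exists t, psat M t a
  | FObl b a => forall t, most (pref M) (fun u => psat M u a) t -> psat M t b
  end.

Definition limitedness (M : PrefModel) : Prop :=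
  forall a : FForm, (exists s, psat M s a) ->
    exists s, most (pref M) (fun u => psat M u a) s.

Definition F_conseq (Gamma : FForm -> Prop) (a : FForm) : Prop :=
  forall M : PrefModel, limitedness M ->
    forall s : pS M, (forall g, Gamma g -> psat M s g) -> psat M s a.

Inductive LForm : Type :=
| LProp : PForm -> LForm
| LArr  : PForm -> PForm -> LForm
| LB    : LForm -> LForm
| LAnd  : LForm -> LForm -> LForm
| LOr   : LForm -> LForm -> LForm
| LImp  : LForm -> LForm -> LForm
| LIff  : LForm -> LForm -> LForm
| LNeg  : LForm -> LForm.

(** * Trust models.  The partition (S_i)_{i in I} is given by the map
    [cell : S -> I] sending each state to the index of its block. *)
Record TrustModel : Type := {
  tS : Type;
  tI : Type;
  cell : tS -> tI;
  tpref : tI -> tS -> tS -> Prop;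
  tR : tS -> tS -> Prop;
  tV : nat -> tS -> Prop
}.

Fixpoint tpsat (M : TrustModel) (s : tS M) (p : PForm) : Prop :=
  match p with
  | PVar n => tV M n s
  | PBot => False
  | PAnd a b => tpsat M s a /\ tpsat M s b
  | POr a b => tpsat M s a \/ tpsat M s b
  | PImp a b => tpsat M s a -> tpsat M s b
  | PIff a b => (tpsat M s a <-> tpsat M s b)
  | PNeg a => ~ tpsat M s a
  end.

Definition truth_i (M : TrustModel) (i : tI M) (p : PForm) : tS M -> Prop :=
  fun v => cell M v = i /\ tpsat M v p.

Definition is_trust_model (M : TrustModel) : Prop :=
  (forall s, exists t, tR M s t) /\
  (forall s t u, tR M s t -> tR M t u -> tR M s u) /\
  (forall i s t, tpref M i s t -> cell M s = i /\ cell M t = i) /\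
  (forall i (p : PForm), (exists v, truth_i M i p v) ->
      exists s, most (tpref M i) (truth_i M i p) s).

Fixpoint tsat (M : TrustModel) (s : tS M) (a : LForm) : Prop :=
  match a with
  | LProp p => tpsat M s p
  | LArr p q => forall t, most (tpref M (cell M s)) (truth_i M (cell M s) p) t ->
                          truth_i M (cell M s) q t
  | LB a => forall v, tR M s v -> tsat M v a
  | LAnd a b => tsat M s a /\ tsat M s b
  | LOr a b => tsat M s a \/ tsat M s b
  | LImp a b => tsat M s a -> tsat M s b
  | LIff a b => (tsat M s a <-> tsat M s b)
  | LNeg a => ~ tsat M s a
  end.

Definition T_conseq (Gamma : LForm -> Prop) (a : LForm) : Prop :=
  forall M : TrustModel, is_trust_model M ->
    forall s : tS M, (forall g, Gamma g -> tsat M s g) -> tsat M s a.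

(** * Translation ^*  (meaningful on flat formulas; on non-flat modal
    arguments it returns an arbitrary default). *)
Fixpoint trans (a : FForm) : LForm :=
  match a with
  | FVar n => LProp (PVar n)
  | FBot => LProp PBot
  | FAnd a b => LAnd (trans a) (trans b)
  | FOr a b => LOr (trans a) (trans b)
  | FImp a b => LImp (trans a) (trans b)
  | FIff a b => LIff (trans a) (trans b)
  | FNeg a => LNeg (trans a)
  | FBox a => match to_prop a with
              | Some p => LArr (PNeg p) PBot
              | None => LProp PBot end
  | FDia a => match to_prop a with
              | Some p => LNeg (LArr p PBot)
              | None => LProp PBot end
  | FObl b a => match to_prop b, to_prop a with
                | Some q, Some p => LArr p q
                | _, _ => LProp PBot end
  end.

Definition trans_set (Gamma : FForm -> Prop) : LForm -> Prop :=
  fun b => exists g, Gamma g /\ b = trans g.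

(* Main.v *)
Require Import Defs.
From Stdlib Require Import Classical.

Lemma most_ext {S : Type} (ge : S -> S -> Prop) (A B : S -> Prop) :
  (forall x, A x <-> B x) -> forall x, most ge A x <-> most ge B x.
Proof.
  intros H x; unfold most; split; intros [H1 H2]; split.
  - apply H; exact H1.
  - intros v Hv; apply H2; apply H; exact Hv.
  - apply H; exact H1.
  - intros v Hv; apply H2; apply H; exact Hv.
Qed.

Definition Hyp (M : TrustModel) (M' : PrefModel) (i : tI M) (e : pS M' -> tS M) : Prop :=
  (forall x, cell M (e x) = i) /\ (forall v, cell M v = i -> exists x, e x = v) /\
  (forall x y, pref M' x y <-> tpref M i (e x) (e y)) /\
  (forall n x, pV M' n x <-> tV M n (e x)).

Lemma prop_ok M M' i e : Hyp M M' i e ->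
  forall a p, to_prop a = Some p -> forall x, psat M' x a <-> tpsat M (e x) p.
Proof.
  intros [Hc [Hs [Hp HV]]].
  induction a; simpl; intros p Hq x; try discriminate;
  try (destruct (to_prop a1) eqn:E1; destruct (to_prop a2) eqn:E2; try discriminate;
       inversion Hq; subst; simpl;
       pose proof (IHa1 _ eq_refl x); pose proof (IHa2 _ eq_refl x); tauto).
  - inversion Hq; subst; simpl; apply HV.
  - inversion Hq; subst; simpl; tauto.
  - destruct (to_prop a) eqn:E; try discriminate; inversion Hq; subst; simpl;
    pose proof (IHa _ eq_refl x); tauto.
Qed.

Lemma most_corr M M' i e : Hyp M M' i e ->
  forall (A : tS M -> Prop) x,
  most (pref M') (fun u => A (e u)) x <-> most (tpref M i) (fun v => cell M v = i /\ A v) (e x).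
Proof.
  intros [Hc [Hs [Hp HV]]] A x; unfold most; split.
  - intros [H1 H2]; split; [split; auto|].
    intros v [Hv1 Hv2] Hge. destruct (Hs v Hv1) as [y <-].
    apply Hp; apply H2; auto; apply Hp; auto.
  - intros [[_ H1] H2]; split; auto.
    intros v Hv Hge. apply Hp. apply H2; [split; auto|]. apply Hp; auto.
Qed.

Lemma main_eq M M' i e : is_trust_model M -> Hyp M M' i e ->
  forall a, flat a -> forall x, psat M' x a <-> tsat M (e x) (trans a).
Proof.
  intros HM HH. pose proof HH as [Hc [Hs [Hp HV]]].
  destruct HM as [_ [_ [Hin Hlim]]].
  induction a; simpl; intros Hf x;
  try (destruct Hf as [F1 F2]; pose proof (IHa1 F1 x); pose proof (IHa2 F2 x); tauto).
  - apply HV.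
  - tauto.
  - pose proof (IHa Hf x); tauto.
  - destruct Hf as [p Ep]; rewrite Ep; simpl; rewrite Hc; unfold truth_i; simpl.
    split.
    + intros Hall t [[Ht Hn] _]. destruct (Hs t Ht) as [y <-].
      exfalso; apply Hn; apply (prop_ok _ _ _ _ HH a p Ep); apply Hall.
    + intros Hm t. apply NNPP; intro Hnot.
      destruct (Hlim i (PNeg p)) as [s Hms].
      { exists (e t); split; auto. simpl. intro Hq. apply Hnot.
        apply (prop_ok _ _ _ _ HH a p Ep); exact Hq. }
      destruct (Hm s Hms) as [_ []].
  - destruct Hf as [p Ep]; rewrite Ep; simpl; rewrite Hc; unfold truth_i; simpl.
    split.
    + intros [t Ht] H.
      destruct (Hlim i p) as [s Hms].
      { exists (e t); split; auto. apply (prop_ok _ _ _ _ HH a p Ep); exact Ht. }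
      destruct (H s Hms) as [_ []].
    + intros H; apply NNPP; intro Hno; apply H.
      intros t [[Ht Hq] _]. destruct (Hs t Ht) as [y <-].
      exfalso; apply Hno; exists y; apply (prop_ok _ _ _ _ HH a p Ep); exact Hq.
  - destruct Hf as [[q Eq] [p Ep]]; rewrite Eq, Ep; simpl; rewrite Hc.
    assert (Hm : forall y, most (pref M') (fun u => psat M' u a2) y <->
                 most (tpref M i) (truth_i M i p) (e y)).
    { intros y. rewrite <- (most_corr _ _ _ _ HH (fun v => tpsat M v p)).
      apply most_ext. intros u; apply (prop_ok _ _ _ _ HH a2 p Ep). }
    split.
    + intros Hall t Ht. pose proof Ht as [[Htc _] _].
      destruct (Hs t Htc) as [y <-]. split; auto.
      apply (prop_ok _ _ _ _ HH a1 q Eq). apply Hall. apply Hm; exact Ht.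
    + intros Hall y Hy. apply (prop_ok _ _ _ _ HH a1 q Eq).
      apply (Hall (e y)). apply Hm; exact Hy.
Qed.

Lemma lim_ok M M' i e : is_trust_model M -> Hyp M M' i e -> limitedness M'.
Proof.
  intros HM HH. pose proof HH as [Hc [Hs [Hp HV]]].
  destruct HM as [_ [_ [Hin Hlim]]].
  assert (Ex : forall a, exists p, forall x, psat M' x a <-> tpsat M (e x) p).
  { induction a.
    - exists (PVar n); intros x; apply HV.
    - exists PBot; intros; simpl; tauto.
    - destruct IHa1 as [p1 H1], IHa2 as [p2 H2]; exists (PAnd p1 p2); intros x;
      simpl; pose proof (H1 x); pose proof (H2 x); tauto.
    - destruct IHa1 as [p1 H1], IHa2 as [p2 H2]; exists (POr p1 p2); intros x;
      simpl; pose proof (H1 x); pose proof (H2 x); tauto.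
    - destruct IHa1 as [p1 H1], IHa2 as [p2 H2]; exists (PImp p1 p2); intros x;
      simpl; pose proof (H1 x); pose proof (H2 x); tauto.
    - destruct IHa1 as [p1 H1], IHa2 as [p2 H2]; exists (PIff p1 p2); intros x;
      simpl; pose proof (H1 x); pose proof (H2 x); tauto.
    - destruct IHa as [p1 H1]; exists (PNeg p1); intros x;
      simpl; pose proof (H1 x); tauto.
    - destruct (classic (forall t, psat M' t a)) as [C|C];
      [exists (PNeg PBot) | exists PBot]; intros x; simpl; tauto.
    - destruct (classic (exists t, psat M' t a)) as [C|C];
      [exists (PNeg PBot) | exists PBot]; intros x; simpl; tauto.
    - destruct (classic (forall t, most (pref M') (fun u => psat M' u a2) t -> psat M' t a1)) as [C|C];
      [exists (PNeg PBot) | exists PBot]; intros x; simpl; tauto. }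
  intros a [s Hsa]. destruct (Ex a) as [p Hpa].
  destruct (Hlim i p) as [t Ht].
  { exists (e s); split; auto; apply Hpa; exact Hsa. }
  pose proof Ht as [[Htc _] _]. destruct (Hs t Htc) as [y <-].
  exists y. apply (most_ext _ _ (fun u => tpsat M (e u) p)); [exact Hpa|].
  apply (most_corr _ _ _ _ HH (fun v => tpsat M v p)). exact Ht.
Qed.

Fixpoint emb (p : PForm) : FForm :=
  match p with
  | PVar n => FVar n
  | PBot => FBot
  | PAnd a b => FAnd (emb a) (emb b)
  | POr a b => FOr (emb a) (emb b)
  | PImp a b => FImp (emb a) (emb b)
  | PIff a b => FIff (emb a) (emb b)
  | PNeg a => FNeg (emb a)
  end.

Theorem theorem3 :
  forall (Gamma : FForm -> Prop) (a : FForm),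
    (forall g, Gamma g -> flat g) -> flat a ->
    (F_conseq Gamma a <-> T_conseq (trans_set Gamma) (trans a)).
Proof.
  intros Gamma a HG Ha. split.
  - intros HF M HM s HGs.
    set (M' := {| pS := {v : tS M | cell M v = cell M s};
                  pref := fun x y => tpref M (cell M s) (proj1_sig x) (proj1_sig y);
                  pV := fun n x => tV M n (proj1_sig x) |}).
    assert (HH : Hyp M M' (cell M s) (@proj1_sig _ _)).
    { split; [intros [x Hx]; exact Hx|]. split.
      - intros v Hv. exists (exist _ v Hv). reflexivity.
      - split; intros; simpl; tauto. }
    pose (s' := exist (fun v => cell M v = cell M s) s eq_refl : pS M').
    apply (main_eq _ _ _ _ HM HH a Ha s').
    apply HF; [exact (lim_ok _ _ _ _ HM HH)|].
    intros g Hg. apply (main_eq _ _ _ _ HM HH g (HG g Hg) s').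
    apply HGs. exists g; auto.
  - intros HT M' HL s HGs.
    set (M := {| tS := pS M'; tI := unit; cell := fun _ => tt;
                 tpref := fun _ => pref M'; tR := fun _ _ => True; tV := pV M' |}).
    assert (Hemb : forall p x, psat M' x (emb p) <-> tpsat M x p).
    { induction p; intros x; simpl; try tauto;
      try (pose proof (IHp1 x); pose proof (IHp2 x); tauto).
      pose proof (IHp x); tauto. }
    assert (HM : is_trust_model M).
    { split; [intros x; exists x; exact I|]. split; [intros; exact I|]. split.
      - intros [] x y _; split; reflexivity.
      - intros [] p [v [_ Hv]].
        destruct (HL (emb p)) as [t Ht]; [exists v; apply Hemb; exact Hv|].
        exists t. revert Ht. apply most_ext. intros u; unfold truth_i; simpl.
        rewrite Hemb. tauto. }
    assert (HH : Hyp M M' tt (fun x => x)).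
    { split; [reflexivity|]. split; [intros v _; exists v; reflexivity|].
      split; intros; simpl; tauto. }
    apply (main_eq _ _ _ _ HM HH a Ha s).
    apply HT; [exact HM|].
    intros b [g [Hg ->]]. apply (main_eq _ _ _ _ HM HH g (HG g Hg) s).
    apply HGs; exact Hg.
Qed.
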